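(* For every $(s_0,p_0)\in G_2\setminus\{(0,0)\}$ there exist a finite Blaschke product $B$ of degree one or two with $B(0)=0$ and $\sigma\in\mathbb D\setminus\{0\}$ such that the map $\varphi(\lambda)=\big(B(\sqrt\lambda)+B(-\sqrt\lambda),\,B(\sqrt\lambda)B(-\sqrt\lambda)\big)$, $\lambda\in\mathbb D$, satisfies $\varphi(\sigma^2)=(s_0,p_0)$. Equivalently, writing $(s_0,p_0)=(t_1+t_2,t_1t_2)$ with $t_1,t_2\in\mathbb D$, there are such $B$ and $\sigma$ with $B(\sigma)=t_1$ and $B(-\sigma)=t_2$. *)

(* Defs.v *)
From mathcomp Require Import all_boot all_order all_algebra.
From mathcomp Require Import complex.
From mathcomp Require Import reals.
Set Implicit Arguments. Unset Strict Implicit. Unset Printing Implicit Defensive.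
Import Order.TTheory GRing.Theory Num.Theory.
Local Open Scope ring_scope.
Local Open Scope complex_scope.

Definition in_disc (R : realType) (z : R[i]) : Prop := `|z| < 1.

Definition G2 (R : realType) (s p : R[i]) : Prop :=
  exists z1 z2 : R[i], in_disc z1 /\ in_disc z2 /\ s = z1 + z2 /\ p = z1 * z2.

(* Finite Blaschke product with unimodular constant c and zeros zs (in D):
   B(z) = c * prod_{a in zs} (z - a) / (1 - conj(a) z). Its degree is size zs. *)
Definition blaschke (R : realType) (c : R[i]) (zs : seq R[i]) (z : R[i]) : R[i] :=
  c * \prod_(a <- zs) ((z - a) / (1 - a^* * z)).

Definition is_finite_blaschke (R : realType) (c : R[i]) (zs : seq R[i]) : Prop :=
  `|c| = 1 /\ all (fun a => `|a| < 1) zs.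

(* phi(lambda) = (B(sqrt l) + B(-sqrt l), B(sqrt l) B(-sqrt l)); this is independent
   of the choice of square root, we use the library's sqrtC. *)
Definition phi (R : realType) (B : R[i] -> R[i]) (l : R[i]) : R[i] * R[i] :=
  (B (sqrtC l) + B (- sqrtC l), B (sqrtC l) * B (- sqrtC l)).

(* Main.v *)
Require Import Defs.
From mathcomp Require Import all_boot all_order all_algebra.
From mathcomp Require Import complex reals.
Import Order.TTheory GRing.Theory Num.Theory.
Local Open Scope ring_scope.
Local Open Scope complex_scope.

From mathcomp Require Import ring lra.
Section Nm.
Context {R : realType}.
Implicit Types z w : R[i].

Definition nm z : R := locked (complex.Re `|z|).

Lemma nmE z : `|z| = (nm z)%:C.
Proof. by rewrite /nm -lock normc_def. Qed.

Lemma nm_ge0 z : 0 <= nm z.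
Proof. by have := normr_ge0 z; rewrite nmE ler0c. Qed.

Lemma nmM z w : nm (z * w) = nm z * nm w.
Proof. by apply: complexI; rewrite rmorphM /= -!nmE normrM. Qed.

Lemma nmD z w : nm (z + w) <= nm z + nm w.
Proof. by rewrite -lecR rmorphD /= -!nmE ler_normD. Qed.

Lemma nmB z w : nm z - nm w <= nm (z - w).
Proof. by rewrite -lecR rmorphB /= -!nmE lerB_dist. Qed.

Lemma nm_sqr z : ((nm z)^+2)%:C = z * z^*.
Proof. by rewrite rmorphXn /= -nmE normCK. Qed.

Lemma nm_disc z : in_disc z <-> nm z < 1.
Proof. by rewrite /in_disc nmE -ltcR. Qed.

Lemma nm_real (r : R) : 0 <= r -> nm r%:C = r.
Proof. by move=> r0; apply: complexI; rewrite -nmE ger0_norm // ler0c. Qed.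

Lemma nm_eq0 z : (nm z == 0) = (z == 0).
Proof. by rewrite -[z == 0]normr_eq0 nmE (inj_eq (@complexI _)). Qed.

Lemma nmN z : nm (- z) = nm z.
Proof. by rewrite /nm -!lock normrN. Qed.
End Nm.

Lemma conjR (R : realType) (r : R) : (r%:C)^*%R = r%:C.
Proof. by apply: conj_Creal; apply/complex_realP; exists r. Qed.
Lemma bl1 (R : realType) (z : R[i]) : blaschke 1 [:: 0] z = z.
Proof. by rewrite /blaschke big_cons big_nil conjC0 !mul0r subr0 subr0 divr1 mulr1 mul1r. Qed.

Lemma bl2 (R : realType) (a z : R[i]) :
  blaschke 1 [:: 0; a] z = z * ((z - a) / (1 - a^* * z)).
Proof. by rewrite /blaschke !big_cons big_nil conjC0 !mul0r subr0 subr0 divr1 mulr1 mul1r. Qed.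

Lemma bl2_sum (R : realType) (a z : R[i]) :
  1 - a^* * z != 0 -> 1 + a^* * z != 0 ->
  blaschke 1 [:: 0; a] z + blaschke 1 [:: 0; a] (- z) =
    2 * z^+2 * (1 - a * a^*) / (1 - (a^+2)^* * z^+2).
Proof.
move=> h1 h2; rewrite !bl2 rmorphXn /=.
have h3 : 1 - a^* ^+ 2 * z ^+ 2 != 0.
  by rewrite (_ : 1 - _ = (1 - a^* * z) * (1 + a^* * z)) ?mulf_neq0 //; ring.
have h2' : 1 - a^* * - z != 0 by rewrite mulrN opprK.
field; by rewrite exprMn h3 h2' h1.
Qed.

Lemma bl2_prod (R : realType) (a z : R[i]) :
  1 - a^* * z != 0 -> 1 + a^* * z != 0 ->
  blaschke 1 [:: 0; a] z * blaschke 1 [:: 0; a] (- z) =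
    z^+2 * (z^+2 - a^+2) / (1 - (a^+2)^* * z^+2).
Proof.
move=> h1 h2; rewrite !bl2 rmorphXn /=.
have h3 : 1 - a^* ^+ 2 * z ^+ 2 != 0.
  by rewrite (_ : 1 - _ = (1 - a^* * z) * (1 + a^* * z)) ?mulf_neq0 //; ring.
have h2' : 1 - a^* * - z != 0 by rewrite mulrN opprK.
field; by rewrite exprMn h3 h2' h1.
Qed.
Lemma key_ineq (R : realFieldType) (s0 np D W : R) :
  0 < s0 -> s0 < 2 -> 0 <= np -> np < 1 -> s0 * (1 - np) <= D -> 0 <= W ->
  4 * np - s0^+2 <= W ->
  4 * D^+2 = W^+2 + (4 - s0^+2) * (s0^+2 - 4 * np^+2) ->
  (s0^+2 + 4 * np^+2) * (4 - s0^+2)^+2 <= (4 + s0^+2) * (2 * D + W)^+2.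
Proof.
move=> s0p s02 np0 np1 hD hW hW2 hrel.
have hD0 : 0 <= D by nra.
have E : (4 + s0^+2) * (2 * D + W)^+2 - (s0^+2 + 4 * np^+2) * (4 - s0^+2)^+2
   = 2 * (4 - s0^+2) * (s0^+2 - 4*np) * (s0^+2 + 4 * np) + (2 * W^+2 + 4 * D * W) * (4 + s0^+2).
  have -> : (2 * D + W)^+2 = 4 * D^+2 + 4 * D * W + W^+2 by ring.
  rewrite hrel; ring.
rewrite -subr_ge0 E.
have h4 : 0 < 4 - s0^+2 by nra.
case: (lerP (4 * np) (s0^+2)) => hc.
  have hX : 0 <= (s0^+2 - 4*np) * (s0^+2 + 4 * np) by apply: mulr_ge0; nra.
  have hY : 0 <= (2 * W^+2 + 4 * D * W) by nra.
  rewrite -mulrA; apply: addr_ge0; [apply: mulr_ge0|apply: mulr_ge0]; nra.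
set w0 := 4 * np - s0^+2.
have w0p : 0 < w0 by rewrite /w0; lra.
have h1 : 2 * w0^+2 + 4 * (s0 * (1 - np)) * w0 <= 2 * W^+2 + 4 * D * W.
  have hw : w0 <= W by rewrite /w0.
  have : w0^+2 <= W^+2 by rewrite -subr_ge0 (_ : W^+2 - w0^+2 = (W - w0) * (W + w0)); [apply: mulr_ge0; lra|ring].
  have : (s0 * (1 - np)) * w0 <= D * W.
    apply: ler_pM => //; first by nra.
    lra.
  nra.
have h2 : 0 <= 2 * (4 - s0^+2) * (s0^+2 - 4*np) * (s0^+2 + 4 * np) + (2 * w0^+2 + 4 * (s0 * (1 - np)) * w0) * (4 + s0^+2).
  have -> : 2 * (4 - s0^+2) * (s0^+2 - 4*np) * (s0^+2 + 4 * np) + (2 * w0^+2 + 4 * (s0 * (1 - np)) * w0) * (4 + s0^+2)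
     = 4 * w0 * s0 * (1 - np) * (2 - s0)^+2 by rewrite /w0; ring.
  have : 0 <= (2 - s0)^+2 by nra.
  have : 0 <= w0 * s0 * (1 - np) by apply: mulr_ge0; [apply: mulr_ge0|]; lra.
  nra.
nra.
Qed.

Lemma real_part (R : realFieldType) (n1 n2 s0 D W : R) :
  0 <= n1 -> n1 < 1 -> 0 <= n2 -> n2 < 1 -> 0 < s0 -> s0 <= n1 + n2 ->
  s0 * (1 - n1 * n2) <= D -> D <= n1 * (1 - n2^+2) + n2 * (1 - n1^+2) ->
  0 <= W -> 4 * (n1 * n2) - s0^+2 <= W -> W + s0^+2 = 2 * n1^+2 + 2 * n2^+2 ->
  4 * D^+2 = W^+2 + (4 - s0^+2) * (s0^+2 - 4 * (n1 * n2)^+2) ->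
  let x := (2 * D + W) / (4 - s0^+2) in
  let k := s0^+2 * (1 - x^+2) / (x * D) in
  [/\ 0 < x, x < 1, 0 < k, k <= 2 &
      (4 - s0^+2) * x^+2 - 4 * D * x + s0^+2 - 4 * (n1 * n2)^+2 = 0].
Proof.
move=> n10 n11 n20 n21 s0p s0le hD1 hD2 W0 hW hpar hrel x k.
have np0 : 0 <= n1 * n2 by apply: mulr_ge0.
have np1 : n1 * n2 < 1 by nra.
have s02 : s0 < 2 by lra.
have h4 : 0 < 4 - s0^+2 by nra.
have Dp : 0 < D by nra.
have xp : 0 < x by rewrite /x; apply: divr_gt0; lra.
have hP : n1 * (1 - n2^+2) + n2 * (1 - n1^+2) < 2 - n1^+2 - n2^+2.
  have : 0 < (1 - n1) * (1 - n2) * (1 - n1 * n2).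
    by apply: mulr_gt0; [apply: mulr_gt0|]; lra.
  have : 0 <= (1 - n1^+2) * (1 - n2^+2) by apply: mulr_ge0; nra.
  nra.
have x1 : x < 1.
  by rewrite /x ltr_pdivrMr // mul1r; lra.
have hq : (4 - s0^+2) * x^+2 - 4 * D * x + s0^+2 - 4 * (n1 * n2)^+2 = 0.
  have -> : (4 - s0^+2) * x^+2 - 4 * D * x = ((2 * D + W)^+2 - 4 * D * (2 * D + W)) / (4 - s0^+2).
    by rewrite /x; field; lra.
  have -> : (2 * D + W)^+2 - 4 * D * (2 * D + W) = W^+2 - 4 * D^+2 by ring.
  rewrite hrel; field; lra.
have hk := @key_ineq _ _ _ _ _ s0p s02 np0 np1 hD1 W0 hW hrel.
have hx2 : s0^+2 + 4 * (n1 * n2)^+2 <= (4 + s0^+2) * x^+2.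
  have -> : (4 + s0^+2) * x^+2 = (4 + s0^+2) * (2 * D + W)^+2 / (4 - s0^+2)^+2.
    by rewrite /x; field; lra.
  rewrite ler_pdivlMr; last by nra.
  by [].
have kp : 0 < k.
  rewrite /k; apply: divr_gt0; last by nra.
  apply: mulr_gt0; first nra.
  nra.
split => //.
rewrite /k ler_pdivrMr; last by nra.
nra.
Qed.

Lemma real_ident (R : realFieldType) (S P D x k : R) :
  0 < S -> 0 < D -> 0 < x -> k = S * (1 - x^+2) / (x * D) ->
  (4 - S) * x^+2 - 4 * D * x + S - 4 * P = 0 ->
  x^+2 - (k * x / D) * (1 - P - D^+2 / S) + k^+2 * P / S = (1 - k / 2)^+2.
Proof.
move=> Sp Dp xp hk hq.
have E : x^+2 - (k * x / D) * (1 - P - D^+2 / S) + k^+2 * P / S - (1 - k / 2)^+2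
   = - k * ((4 - S) * x^+2 - 4 * D * x + S - 4 * P) / (4 * D * x).
  rewrite hk; field; lra.
by apply/eqP; rewrite -subr_eq0 E hq !(mulr0, mul0r, oppr0).
Qed.

Lemma nmJ (R : realType) (z : R[i]) : nm (z^*%R) = nm z.
Proof. by rewrite /nm -!lock norm_conjC. Qed.

Lemma nmC2 (R : realType) (z : R[i]) : (nm z)%:C ^+ 2 = z * z^*%R.
Proof. by rewrite -nm_sqr rmorphXn. Qed.

Lemma nmX2 (R : realType) (z : R[i]) : nm (z ^+ 2) = nm z ^+ 2.
Proof. by rewrite !expr2 nmM. Qed.

Lemma nm_sqr_eq (R : realType) (z : R[i]) (r : R) : 0 <= r ->
  z * z^*%R = (r ^+ 2)%:C -> nm z = r.
Proof.
move=> r0; rewrite -nm_sqr => /complexI h.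
have := nm_ge0 z; move: h; set u := nm z => h u0.
have : (u - r) * (u + r) = 0 by rewrite -subr_sqr h subrr.
move/eqP; rewrite mulf_eq0 => /orP [/eqP h1|/eqP h1]; first by lra.
lra.
Qed.

Lemma one_sub_neq0 (R : realType) (w : R[i]) : nm w < 1 -> 1 - w != 0.
Proof.
move=> h; apply/eqP => e; have : w = 1 by apply/eqP; rewrite -subr_eq0 -oppr_eq0 opprB e.
move=> ew; move: h; rewrite ew (_ : 1 = (1:R)%:C) // nm_real //; lra.
Qed.

Section RC.
Context {R : realType}.
Implicit Types a b : R.
Lemma rCD a b : (a + b)%:C = a%:C + b%:C. Proof. exact: rmorphD. Qed.
Lemma rCB a b : (a - b)%:C = a%:C - b%:C. Proof. exact: rmorphB. Qed.
Lemma rCM a b : (a * b)%:C = a%:C * b%:C. Proof. exact: rmorphM. Qed.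
Lemma rCX a n : (a ^+ n)%:C = a%:C ^+ n. Proof. exact: rmorphXn. Qed.
Lemma rCV a : (a^-1)%:C = a%:C^-1. Proof. exact: fmorphV. Qed.
Lemma rCN a : (- a)%:C = - a%:C. Proof. exact: rmorphN. Qed.
Lemma rC1 : (1 : R)%:C = 1. Proof. exact: rmorph1. Qed.
Lemma rCn n : (n%:R : R)%:C = n%:R. Proof. exact: rmorph_nat. Qed.
End RC.

Lemma nmCC (R : realType) (z : R[i]) : (nm z)%:C * (nm z)%:C = z * z^*%R.
Proof. by rewrite -rCM -expr2 nm_sqr. Qed.

Section CJ.
Context {R : realType}.
Implicit Types x y : R[i].
Lemma cjD x y : (x + y)^*%R = x^*%R + y^*%R. Proof. exact: rmorphD. Qed.
Lemma cjB x y : (x - y)^*%R = x^*%R - y^*%R. Proof. exact: rmorphB. Qed.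
Lemma cjN x : (- x)^*%R = - x^*%R. Proof. exact: rmorphN. Qed.
Lemma cjM x y : (x * y)^*%R = x^*%R * y^*%R. Proof. exact: rmorphM. Qed.
Lemma cjX x n : (x ^+ n)^*%R = x^*%R ^+ n. Proof. exact: rmorphXn. Qed.
Lemma cjV x : (x^-1)^*%R = (x^*%R)^-1. Proof. exact: fmorphV. Qed.
Lemma cj1 : (1 : R[i])^*%R = 1. Proof. exact: rmorph1. Qed.
Lemma cjn n : (n%:R : R[i])^*%R = n%:R. Proof. exact: rmorph_nat. Qed.
Lemma cjK x : (x^*%R)^*%R = x. Proof. exact: conjCK. Qed.
End CJ.

Ltac nz := repeat match goal with
 | |- is_true (_ && _) => apply/andP; split
 | |- is_true (_ * _ != 0) => apply: mulf_neq0
 | |- is_true (_ ^+ _ != 0) => apply: expf_neq0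
 | |- is_true (_^-1 != 0) => rewrite invr_eq0
 end; try assumption.
Ltac fld := field; nz.
Theorem mainTheorem6 (R : realType) (s0 p0 : R[i]) :
  G2 s0 p0 -> (s0, p0) <> (0, 0) ->
  exists (c : R[i]) (zs : seq R[i]) (sigma : R[i]),
    [/\ is_finite_blaschke c zs,
        (size zs = 1)%N \/ (size zs = 2)%N,
        blaschke c zs 0 = 0,
        in_disc sigma /\ sigma != 0 &
        phi (blaschke c zs) (sigma ^+ 2) = (s0, p0)].
Proof.
move=> [t1 [t2 [h1 [h2 [-> ->]]]]] hne.
move/nm_disc: h1 => h1; move/nm_disc: h2 => h2.
have n10 := nm_ge0 t1; have n20 := nm_ge0 t2.
have [hs0|sn0] := eqVneq (t1 + t2) 0.
  have pn0 : t1 * t2 != 0 by apply/eqP => hp; apply: hne; rewrite hs0 hp.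
  set p := t1 * t2 in hne pn0 *.
  exists 1, [:: 0], (sqrtC (- p)).
  split.
  - by split; [rewrite normr1 | rewrite /= normr0 ltr01].
  - by left.
  - by rewrite bl1.
  - split; last by rewrite sqrtC_eq0 oppr_eq0.
    apply/nm_disc.
    have e : nm (sqrtC (- p)) ^+ 2 = nm t1 * nm t2.
      by rewrite expr2 -nmM -expr2 sqrtCK nmN /p nmM.
    have := nm_ge0 (sqrtC (- p)).
    have : nm t1 * nm t2 < 1 by nra.
    nra.
  - rewrite /phi !sqrtCK !bl1 hs0 subrr; congr pair.
    by rewrite mulrN -expr2 sqrtCK opprK.

set s := t1 + t2 in hne sn0 *; set p := t1 * t2 in hne *.
set d := s - s^*%R * p.
have scn0 : s^*%R != 0 by rewrite conjC_eq0.
have s0p : 0 < nm s by rewrite lt0r nm_eq0 sn0 nm_ge0.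
have hsle : nm s <= nm t1 + nm t2 by apply: nmD.
have hnp : nm p = nm t1 * nm t2 by rewrite /p nmM.
have hD1 : nm s * (1 - nm t1 * nm t2) <= nm d.
  have := nmB s (s^*%R * p); rewrite nmM nmJ hnp mulrBr mulr1; lra.
have hn1 : 0 <= 1 - nm t1 ^+ 2 by nra.
have hn2 : 0 <= 1 - nm t2 ^+ 2 by nra.
have hD2 : nm d <= nm t1 * (1 - nm t2 ^+ 2) + nm t2 * (1 - nm t1 ^+ 2).
  have -> : d = t1 * ((1 - nm t2 ^+ 2)%:C) + t2 * ((1 - nm t1 ^+ 2)%:C).
    rewrite !rmorphB /= !rmorph1 !nm_sqr /d /s /p rmorphD /=; ring.
  apply: le_trans (nmD _ _) _; rewrite !nmM !nm_real //.
set W := nm (s ^+ 2 - 4 * p).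
have hW : 4 * (nm t1 * nm t2) - nm s ^+ 2 <= W.
  have := nmB (4 * p) (s ^+ 2).
  rewrite (_ : nm (4 * p - s ^+ 2) = W); last by rewrite /W -nmN opprB.
  rewrite nmM nmX2 hnp.
  have -> : nm (4 : R[i]) = 4.
    by rewrite (_ : (4 : R[i]) = (4 : R)%:C) ?nm_real // rmorph_nat.
  by [].
have hpar : W + nm s ^+ 2 = 2 * nm t1 ^+ 2 + 2 * nm t2 ^+ 2.
  have -> : W = nm (t1 - t2) ^+ 2.
    by rewrite /W -nmX2 /s /p; congr nm; ring.
  apply: complexI; rewrite !(rCD, rCN, rCM) !nmCC ?rC1 ?rCn.
  rewrite !rmorphB /s rmorphD /=; ring.
have hrel : 4 * nm d ^+ 2 = W ^+ 2 + (4 - nm s ^+ 2) * (nm s ^+ 2 - 4 * (nm t1 * nm t2) ^+ 2).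
  apply: complexI; rewrite -hnp !(rCD, rCN, rCM) !nmCC ?rC1 ?rCn.
  rewrite /d /W /p /s; rewrite ?(cjD, cjN, cjM, cjX, cjn, cj1, cjK).
  ring.
have := @real_part R (nm t1) (nm t2) (nm s) (nm d) W n10 h1 n20 h2 s0p hsle hD1 hD2 (nm_ge0 _) hW hpar hrel.
set x := (2 * nm d + W) / (4 - nm s ^+ 2).
set k := nm s ^+ 2 * (1 - x ^+ 2) / (x * nm d).
move=> [xp x1 kp k2 hq].

have Dp : 0 < nm d.
  apply: lt_le_trans hD1; apply: mulr_gt0 => //.
  have : nm t1 * nm t2 < 1 by nra.
  lra.
have dn0 : d != 0 by rewrite -nm_eq0 gt_eqF.
have xCn0 : x%:C != 0 by rewrite (inj_eq (@complexI _)) gt_eqF.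
have DCn0 : (nm d)%:C != 0 by rewrite (inj_eq (@complexI _)) gt_eqF.
have kCn0 : k%:C != 0 by rewrite (inj_eq (@complexI _)) gt_eqF.
set lam := x%:C / (nm d)%:C * d.
have lamn0 : lam != 0 by rewrite /lam !mulf_neq0 ?invr_eq0.
have lamc : lam^*%R = x%:C / (nm d)%:C * d^*%R.
  by rewrite /lam !cjM cjV !conjR.
have Fl : lam * lam^*%R = x%:C ^+ 2.
  rewrite lamc; have e : d * d^*%R = (nm d)%:C ^+ 2 by rewrite nmC2.
  rewrite /lam (_ : x%:C / (nm d)%:C * d * (x%:C / (nm d)%:C * d^*%R) =
     x%:C ^+2 / (nm d)%:C ^+ 2 * (d * d^*%R)); last by fld.
  by rewrite e; fld.
have Fp : p = (s - (nm d)%:C * lam / x%:C) / s^*%R.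
  rewrite /lam (_ : (nm d)%:C * (x%:C / (nm d)%:C * d) / x%:C = d); last by fld.
  by rewrite /d; fld.
have Fpc : p^*%R = (s^*%R - (nm d)%:C * x%:C / lam) / s.
  have e : d^*%R = (nm d)%:C * x%:C / lam.
    rewrite /lam; apply: (mulfI dn0); rewrite -nmC2.
    by fld.
  rewrite (_ : p^*%R = (s^*%R - d^*%R) / s); first by rewrite e.
  by rewrite /d cjB !cjM cjK; fld.
have Fk : k%:C = s * s^*%R * (1 - x%:C ^+ 2) / (x%:C * (nm d)%:C).
  by rewrite /k !(rCM, rCB, rCV, rCX) -rCX nm_sqr rC1.
have hkdef : k = nm s ^+ 2 * (1 - x ^+ 2) / (x * nm d) by [].
clearbody lam d p s x k.
set b := lam - k%:C * p / s.
have bc : b^*%R = x%:C ^+ 2 / lam - k%:C * p^*%R / s^*%R.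
  rewrite /b cjB !cjM cjV conjR.
  by rewrite (_ : lam^*%R = x%:C ^+ 2 / lam) //; apply: (mulfI lamn0); rewrite Fl; fld.
have K1 : k%:C * lam = s * (1 - b^*%R * lam).
  by rewrite bc Fpc Fk; fld.
have BB : b * b^*%R = ((1 - k / 2) ^+ 2)%:C.
  rewrite -(@real_ident R (nm s ^+ 2) (nm p ^+ 2) (nm d) x k) //; first last.
  - by rewrite hnp.
  - by apply: exprn_gt0.
  rewrite !(rCD, rCN, rCM, rCV) !nmCC ?rC1.
  rewrite bc Fpc /b Fp -[d * d^*%R]nmCC; fld.

set sig := sqrtC lam; set a := sqrtC b.
have hnb : nm b = 1 - k / 2 by apply: nm_sqr_eq; [lra|exact BB].
have hnl : nm lam = x by apply: nm_sqr_eq => //; [lra | rewrite Fl rCX].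
have ha2 : a ^+ 2 = b by apply: sqrtCK.
have hs2 : sig ^+ 2 = lam by apply: sqrtCK.
have hna : nm a ^+ 2 = 1 - k / 2 by rewrite -nmX2 ha2.
have hnsig : nm sig ^+ 2 = x by rewrite -nmX2 hs2.
have na0 := nm_ge0 a; have ns0 := nm_ge0 sig.
have na1 : nm a < 1 by nra.
have ns1 : nm sig < 1 by nra.
have aac : a * a^*%R = (1 - k / 2)%:C by rewrite -nmCC -rCM -expr2 hna.
have hw : nm (a^*%R * sig) < 1.
  rewrite nmM nmJ; have : nm a * nm sig <= nm a by rewrite ler_piMr // ltW.
  lra.
have hden1 : 1 - a^*%R * sig != 0 by apply: one_sub_neq0.
have hden2 : 1 + a^*%R * sig != 0.
  by rewrite -[a^*%R * sig]opprK; apply: one_sub_neq0; rewrite nmN.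
have K1' : 1 - b^*%R * lam = k%:C * lam / s.
  by apply: (mulfI sn0); rewrite -K1; fld.
exists 1, [:: 0; a], sig; split.
- split; first by rewrite normr1.
  by rewrite /= normr0 ltr01 /= andbT nmE -rC1 ltcR.
- by right.
- by rewrite bl2 mul0r.
- split; [by apply/nm_disc | by rewrite sqrtC_eq0].
- rewrite /phi hs2 -/sig bl2_sum // bl2_prod // hs2 ha2 aac K1'.
  congr pair.
  + rewrite !(rCD, rCN, rCM, rCV) ?rC1. fld.
  + rewrite /b. fld.
Qed.
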